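(* Let $X$ be a Hausdorff countably compact space with a point-countable Pytkeev network. Then $X$ is a compact metrizable space. *)

(* Defs.v *)
From Stdlib Require Import Reals List.
Open Scope R_scope.

Definition set (X : Type) := X -> Prop.

Record topology (X : Type) : Type := {
  is_open : set X -> Prop;
  open_full : is_open (fun _ => True);
  open_inter : forall U V, is_open U -> is_open V ->
                 is_open (fun x => U x /\ V x);
  open_union : forall (F : set X -> Prop),
                 (forall U, F U -> is_open U) ->
                 is_open (fun x => exists U, F U /\ U x)
}.
Arguments is_open {X} t U.

Definition finite_set {X : Type} (A : set X) : Prop :=
  exists l : list X, forall x, A x -> In x l.

Definition infinite_set {X : Type} (A : set X) : Prop := ~ finite_set A.

Definition countable_family {X : Type} (F : set X -> Prop) : Prop :=
  exists f : nat -> set X, forall N, F N -> exists n, f n = N.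

Definition top_closure {X : Type} (t : topology X) (A : set X) : set X :=
  fun x => forall U, is_open t U -> U x -> exists y, U y /\ A y.

Definition hausdorff {X : Type} (t : topology X) : Prop :=
  forall x y : X, x <> y -> exists U V, is_open t U /\ is_open t V /\
    U x /\ V y /\ (forall z, ~ (U z /\ V z)).

Definition top_compact {X : Type} (t : topology X) : Prop :=
  forall (I : Type) (U : I -> set X),
    (forall i, is_open t (U i)) -> (forall x, exists i, U i x) ->
    exists l : list I, forall x, exists i, In i l /\ U i x.

Definition countably_compact {X : Type} (t : topology X) : Prop :=
  forall U : nat -> set X,
    (forall n, is_open t (U n)) -> (forall x, exists n, U n x) ->
    exists m, forall x, exists n, (n <= m)%nat /\ U n x.

Definition network_at {X : Type} (t : topology X) (N : set X -> Prop) (x : X) :=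
  forall O, is_open t O -> O x -> exists P, N P /\ P x /\ (forall z, P z -> O z).

Definition pytkeev_network_at {X : Type} (t : topology X)
    (N : set X -> Prop) (x : X) : Prop :=
  network_at t N x /\
  forall O (A : set X), is_open t O -> O x -> top_closure t A x -> ~ A x ->
    exists P, N P /\ (forall z, P z -> O z) /\
      infinite_set (fun z => P z /\ A z).

Definition pytkeev_network {X : Type} (t : topology X) (N : set X -> Prop) :=
  forall x, pytkeev_network_at t N x.

Definition point_countable {X : Type} (N : set X -> Prop) : Prop :=
  forall x, countable_family (fun P => N P /\ P x).

Definition is_metric {X : Type} (d : X -> X -> R) : Prop :=
  (forall x y, 0 <= d x y) /\ (forall x y, d x y = 0 <-> x = y) /\
  (forall x y, d x y = d y x) /\ (forall x y z, d x z <= d x y + d y z).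

Definition metric_open {X : Type} (d : X -> X -> R) (U : set X) : Prop :=
  forall x, U x -> exists eps, 0 < eps /\ forall y, d x y < eps -> U y.

Definition metrizable {X : Type} (t : topology X) : Prop :=
  exists d : X -> X -> R, is_metric d /\
    forall U, is_open t U <-> metric_open d U.

(* Main.v *)
Require Import Defs.
From Stdlib Require Import Reals List.
From Stdlib Require Import Lia Lra Classical ClassicalEpsilon FunctionalExtensionality PropExtensionality Arith Cantor.
Import ListNotations.
Open Scope R_scope.


Lemma open_ext {X} (t : topology X) (A B : set X) :
  (forall x, A x <-> B x) -> is_open t A -> is_open t B.
Proof.
  intros H HA. replace B with A; auto.
  extensionality x. apply propositional_extensionality. apply H.
Qed.

Lemma open_empty {X} (t : topology X) : is_open t (fun _ => False).
Proof.
  eapply open_ext; [|apply (open_union _ t (fun _ => False))].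
  - intros x; split; [intros [U [Hf _]]; destruct Hf|intros []].
  - intros U [].
Qed.

Lemma open_union2 {X} (t : topology X) U V :
  is_open t U -> is_open t V -> is_open t (fun x => U x \/ V x).
Proof.
  intros HU HV.
  eapply open_ext; [|apply (open_union _ t (fun W => W = U \/ W = V))].
  - intros x; split.
    + intros [W [[->| ->] HW]]; auto.
    + intros [H|H]; eauto.
  - intros W [->| ->]; auto.
Qed.

Lemma closure_incl {X} (t : topology X) (A : set X) x : A x -> top_closure t A x.
Proof. intros Hx U _ HU. exists x; auto. Qed.

Lemma compl_closure_open {X} (t : topology X) (A : set X) :
  is_open t (fun x => ~ top_closure t A x).
Proof.
  eapply open_ext; [|apply (open_union _ t (fun U => is_open t U /\ forall z, U z -> ~ A z))].
  - intros x; split.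
    + intros [U [[HUo HUA] HUx]] Hc.
      destruct (Hc U HUo HUx) as [y [Hy1 Hy2]]. exact (HUA y Hy1 Hy2).
    + intros Hx. apply not_all_ex_not in Hx as [U HU].
      apply imply_to_and in HU as [HUo HU].
      apply imply_to_and in HU as [HUx HU].
      exists U. split; [split; auto|auto].
      intros z Hz HAz. apply HU. exists z; auto.
  - intros U [H _]; auto.
Qed.

Lemma closure_mono {X} (t : topology X) (A B : set X) :
  (forall z, A z -> B z) -> forall x, top_closure t A x -> top_closure t B x.
Proof.
  intros H x Hx U HU HUx. destruct (Hx U HU HUx) as [y [Hy1 Hy2]]. eauto.
Qed.

Lemma closure_avoid {X} (t : topology X) (A U : set X) :
  is_open t U -> (forall z, U z -> ~ A z) -> forall x, U x -> ~ top_closure t A x.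
Proof.
  intros HU H x Hx Hc. destruct (Hc U HU Hx) as [y [Hy1 Hy2]]. exact (H y Hy1 Hy2).
Qed.

Lemma accumulation {X} (t : topology X) (s : nat -> X) :
  countably_compact t ->
  (forall i, exists m, forall n, (m <= n)%nat -> s n <> s i) ->
  exists y, top_closure t (fun z => (exists n, z = s n) /\ z <> y) y.
Proof.
  intros Hcc Hs. apply NNPP. intros Hno.
  set (T := fun m (z : X) => exists n, (m <= n)%nat /\ z = s n).
  destruct (Hcc (fun m y => ~ top_closure t (T m) y)) as [M HM].
  - intros m; apply compl_closure_open.
  - intros y. apply NNPP. intros Hy. apply Hno. exists y.
    intros U HU HUy.
    assert (Hall : forall m, top_closure t (T m) y).
    { intros m. apply NNPP. intros Hm. apply Hy. eauto. }
    destruct (Hall 0%nat U HU HUy) as [z [Hz1 [k [_ ->]]]].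
    destruct (classic (s k = y)) as [Hky|Hky].
    + destruct (Hs k) as [m Hm].
      destruct (Hall m U HU HUy) as [z [Hz1' [k' [Hk' ->]]]].
      exists (s k'). split; auto. split; eauto. rewrite <- Hky. apply Hm; auto.
    + exists (s k). split; auto. split; eauto.
  - destruct (HM (s M)) as [n [Hn Hc]]. apply Hc. apply closure_incl.
    exists M; split; auto.
Qed.


Lemma build_seq {X : Type} (R : list X -> X -> Prop) :
  (forall h, exists x, R h x) -> exists s : nat -> X, forall n, R (map s (seq 0 n)) (s n).
Proof.
  intros H.
  pose (c := fun h => constructive_indefinite_description _ (H h)).
  pose (hist := fix hist (n : nat) : list X :=
          match n with O => [] | S m => hist m ++ [proj1_sig (c (hist m))] end).
  exists (fun n => proj1_sig (c (hist n))).
  assert (Hh : forall n, hist n = map (fun n => proj1_sig (c (hist n))) (seq 0 n)).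
  { induction n; auto. rewrite seq_S, map_app. simpl. rewrite <- IHn. reflexivity. }
  intros n. rewrite <- Hh. exact (proj2_sig (c (hist n))).
Qed.

Lemma finite_refine {X} (t : topology X) (N : set X -> Prop) (G : set X -> Prop) :
  countably_compact t -> point_countable N -> pytkeev_network t N ->
  (forall V, G V -> is_open t V) -> (forall x, exists V, G V /\ V x) ->
  exists F : list (set X),
    (forall P, In P F -> (N P /\ exists V, G V /\ forall z, P z -> V z) \/ (forall z, ~ P z)) /\
    (forall z, exists P, In P F /\ P z).
Proof.
  intros Hcc Hpc Hpyt HGo HGc.
  set (good := fun P => N P /\ exists V, G V /\ forall z, P z -> V z).
  apply NNPP; intro Hno.
  pose (enum := fun x => proj1_sig (constructive_indefinite_description _ (Hpc x))).
  assert (enum_spec : forall p P, N P -> P p -> exists j, enum p j = P).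
  { intros p P HP Hp. unfold enum.
    destruct (constructive_indefinite_description _ (Hpc p)) as [f Hf]. simpl. auto. }
  pose (E := fun p j => if excluded_middle_informative (good (enum p j)) then enum p j
                        else (fun _ : X => False)).
  assert (Egood : forall p j, good (enum p j) -> E p j = enum p j).
  { intros p j Hg. unfold E. destruct excluded_middle_informative; tauto. }
  pose (Lh := fun h : list X => flat_map (fun p => map (E p) (seq 0 (length h))) h).
  assert (HR : forall h, exists x, forall P, In P (Lh h) -> ~ P x).
  { intros h. apply NNPP; intro Hc; apply Hno; exists (Lh h); split.
    - intros P HP. apply in_flat_map in HP as [p [_ HP]].
      apply in_map_iff in HP as [j [<- _]].
      unfold E; destruct excluded_middle_informative; [left; auto | right; auto].
    - intros z. apply NNPP; intro Hz; apply Hc; exists z; intros P HP HPz; apply Hz; eauto. }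
  destruct (build_seq _ HR) as [s Hs].
  assert (key : forall i j n, (i < n)%nat -> (j < n)%nat -> ~ E (s i) j (s n)).
  { intros i j n Hi Hj. apply (Hs n). unfold Lh. apply in_flat_map. exists (s i).
    rewrite length_map, length_seq. split; apply in_map, in_seq; lia. }
  assert (Hdist : forall i, exists m, forall n, (m <= n)%nat -> s n <> s i).
  { intro i. destruct (HGc (s i)) as [V [HV HVi]].
    destruct (Hpyt (s i)) as [Hnet _].
    destruct (Hnet V (HGo V HV) HVi) as [P [HP [HPi HPV]]].
    destruct (enum_spec _ _ HP HPi) as [j Hj].
    exists (S (max i j)). intros n Hn Heq. apply (key i j n); try lia.
    rewrite Egood, Hj; [rewrite Heq; auto|]. rewrite Hj; split; eauto. }
  destruct (accumulation t s Hcc Hdist) as [y Hy].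
  destruct (HGc y) as [V [HV HVy]].
  destruct (Hpyt y) as [_ Hpk].
  destruct (Hpk V _ (HGo V HV) HVy Hy) as [P [HP [HPV Hinf]]].
  { intros [_ H]; auto. }
  apply Hinf.
  destruct (classic (exists m, P (s m))) as [[m Hm] | Hne].
  - destruct (enum_spec _ _ HP Hm) as [j Hj].
    exists (map s (seq 0 (S (max m j)))). intros z [Hz [[n ->] _]].
    destruct (Compare_dec.le_lt_dec n (max m j)).
    + apply in_map, in_seq; lia.
    + exfalso; apply (key m j n); try lia. rewrite Egood, Hj; auto.
      rewrite Hj; split; eauto.
  - exists []. intros z [Hz [[n ->] _]]. apply Hne; eauto.
Qed.

Lemma compact_of {X} (t : topology X) (N : set X -> Prop) :
  countably_compact t -> point_countable N -> pytkeev_network t N -> top_compact t.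
Proof.
  intros Hcc Hpc Hpyt I U HUo HUc.
  destruct (finite_refine t N (fun V => is_open t V /\ exists i, forall z, V z -> U i z)
              Hcc Hpc Hpyt) as [F [HF1 HF2]].
  - intros V [H _]; auto.
  - intros x. destruct (HUc x) as [i Hi]. exists (U i). split; eauto.
  - assert (H : forall L : list (set X),
             (forall P, In P L -> (N P /\ exists V, (is_open t V /\ exists i, forall z, V z -> U i z) /\ forall z, P z -> V z) \/ (forall z, ~ P z)) ->
             exists l : list I, forall x, (exists P, In P L /\ P x) -> exists i, In i l /\ U i x).
    { induction L as [|P L IH]; intros HF.
      - exists nil. intros x [P [HP _]]; destruct HP.
      - destruct IH as [l Hl]. { intros Q HQ; apply HF; simpl; auto. }
        destruct (HF P (or_introl eq_refl)) as [[_ [V [[_ [i Hi]] HPV]]] | Hemp].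
        + exists (i :: l). intros x [Q [[<-|HQ] Hx]].
          * exists i; split; simpl; auto.
          * destruct (Hl x) as [j [Hj1 Hj2]]; eauto. exists j; simpl; auto.
        + exists l. intros x [Q [[<-|HQ] Hx]].
          * destruct (Hemp x Hx).
          * eauto. }
    destruct (H F HF1) as [l Hl]. exists l. intros x. apply Hl. auto.
Qed.


Definition covers {X} (L : list (set X)) (z : X) := exists Q, In Q L /\ Q z.
Definition pt {X} (x0 : X) (L : list (set X)) : X :=
  epsilon (inhabits x0) (fun z => ~ covers L z).
Definition aux {X} (x0 : X) (enum : X -> nat -> set X) (acc : list (set X)) (l : list nat) :=
  fold_left (fun acc n => acc ++ [enum (pt x0 acc) n]) l acc.

Lemma process {X} (x0 : X) (N : set X -> Prop) (enum : X -> nat -> set X) :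
  (forall p P, N P -> P p -> exists j, enum p j = P) ->
  forall k (F acc : list (set X)), (length F <= k)%nat ->
  (forall P, In P F -> (exists z, P z) -> N P) ->
  (forall z, ~ covers acc z -> covers F z) ->
  exists l, (forall z, covers (aux x0 enum acc l) z) /\
            (forall Q, In Q (aux x0 enum acc l) -> In Q acc \/ In Q F).
Proof.
  intros Henum k. induction k as [|k IH]; intros F acc HF HN Hcov.
  - destruct F; [|simpl in HF; lia].
    exists []. simpl. split; auto.
    intros z. apply NNPP; intro Hz. destruct (Hcov z Hz) as [Q [[] _]].
  - destruct (classic (forall z, covers acc z)) as [Hall|Hnot].
    + exists []; simpl; split; auto.
    + apply not_all_ex_not in Hnot as [z0 Hz0].
      assert (Hp : ~ covers acc (pt x0 acc)).
      { unfold pt. apply (epsilon_spec (inhabits x0) (fun z => ~ covers acc z)). eauto. }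
      destruct (Hcov _ Hp) as [P [HPF HPp]].
      destruct (Henum _ P (HN P HPF (ex_intro _ _ HPp)) HPp) as [n Hn].
      destruct (in_split _ _ HPF) as [F1 [F2 ->]].
      destruct (IH (F1 ++ F2) (acc ++ [P])) as [l [Hl1 Hl2]].
      * rewrite length_app in *; simpl in HF; lia.
      * intros Q HQ; apply HN. apply in_app_or in HQ; apply in_or_app; simpl; tauto.
      * intros z Hz. destruct (classic (covers acc z)) as [Hc|Hc].
        { exfalso; apply Hz. destruct Hc as [Q [HQ HQz]]. exists Q; split; auto; apply in_or_app; auto. }
        destruct (Hcov z Hc) as [Q [HQ HQz]].
        apply in_app_or in HQ as [HQ|[<-|HQ]].
        -- exists Q; split; auto; apply in_or_app; auto.
        -- exfalso; apply Hz. exists P; split; auto; apply in_or_app; simpl; auto.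
        -- exists Q; split; auto; apply in_or_app; simpl; auto.
      * exists (n :: l). simpl. rewrite Hn. split; auto.
        intros Q HQ. destruct (Hl2 Q HQ) as [H|H].
        -- apply in_app_or in H as [H|[<-|[]]]; auto.
        -- right. apply in_app_or in H; apply in_or_app; simpl; tauto.
Qed.

Fixpoint encode (l : list nat) : nat :=
  match l with [] => O | a :: l' => S (to_nat (a, encode l')) end.
Fixpoint decode_f (f : nat) (n : nat) : list nat :=
  match f with O => [] | S f' =>
    match n with O => [] | S m => fst (of_nat m) :: decode_f f' (snd (of_nat m)) end end.
Definition decode (n : nat) := decode_f n n.

Lemma decode_f_encode : forall l f, (encode l <= f)%nat -> decode_f f (encode l) = l.
Proof.
  induction l as [|a l IH]; intros f Hf.
  - destruct f; reflexivity.
  - cbn [encode] in *. destruct f as [|f]; [lia|]. cbn [decode_f].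
    rewrite cancel_of_to. cbn [fst snd]. f_equal. apply IH.
    pose proof (to_nat_non_decreasing a (encode l)). lia.
Qed.

Lemma decode_encode l : decode (encode l) = l.
Proof. apply decode_f_encode; auto. Qed.

Definition enum_of {X} {N : set X -> Prop} (Hpc : point_countable N) (x : X) : nat -> set X :=
  proj1_sig (constructive_indefinite_description _ (Hpc x)).

Lemma enum_of_spec {X} {N : set X -> Prop} (Hpc : point_countable N) :
  forall p P, N P -> P p -> exists j, enum_of Hpc p j = P.
Proof.
  intros p P HP Hp. unfold enum_of.
  destruct (constructive_indefinite_description _ (Hpc p)) as [f Hf]. simpl. auto.
Qed.

Definition Mset {X} (x0 : X) (enum : X -> nat -> set X) (c : nat) : set X :=
  nth (snd (of_nat c)) (aux x0 enum [] (decode (fst (of_nat c)))) (fun _ => False).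

Lemma Mnetwork {X} (t : topology X) (N : set X -> Prop) (x0 : X)
  (Hpc : point_countable N) :
  hausdorff t -> countably_compact t -> pytkeev_network t N ->
  forall x O, is_open t O -> O x ->
  exists c, Mset x0 (enum_of Hpc) c x /\ forall z, Mset x0 (enum_of Hpc) c z -> O z.
Proof.
  intros Hh Hcc Hpyt x O HO Hx.
  destruct (finite_refine t N (fun V => V = O \/ (is_open t V /\ ~ V x)) Hcc Hpc Hpyt)
    as [F [HF1 HF2]].
  - intros V [->|[H _]]; auto.
  - intros z. destruct (classic (z = x)) as [->|Hzx].
    + exists O; auto.
    + destruct (Hh z x Hzx) as [U [V [HU [HV [HUz [HVx Hd]]]]]].
      exists U. split; auto. right; split; auto. intros HUx. apply (Hd x); auto.
  - destruct (process x0 N (enum_of Hpc) (enum_of_spec Hpc) (length F) F [] (le_n _))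
      as [l [Hl1 Hl2]].
    + intros P HP [z Hz]. destruct (HF1 P HP) as [[H _]|H]; auto. destruct (H z Hz).
    + intros z _. destruct (HF2 z) as [P [HP HPz]]. exists P; auto.
    + destruct (Hl1 x) as [Q [HQ HQx]].
      destruct (In_nth _ _ (fun _ => False) HQ) as [i [_ Hi]].
      assert (Hm : Mset x0 (enum_of Hpc) (to_nat (encode l, i)) = Q).
      { unfold Mset. rewrite cancel_of_to. cbn [fst snd]. rewrite decode_encode. exact Hi. }
      exists (to_nat (encode l, i)). rewrite Hm. split; auto.
      destruct (Hl2 Q HQ) as [[]|HQF].
      destruct (HF1 Q HQF) as [[_ [V [[->|[_ HVx]] HQV]]]|Hemp].
      * auto.
      * exfalso; auto.
      * destruct (Hemp x HQx).
Qed.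


Lemma open_finite_inter {X} (t : topology X) {I : Type} (l : list I) (f : I -> set X) :
  (forall i, is_open t (f i)) -> is_open t (fun z => forall i, In i l -> f i z).
Proof.
  intros Hf. induction l as [|a l IH].
  - eapply open_ext; [|apply (open_full _ t)]. intros z; split; [intros _ i []|auto].
  - eapply open_ext; [|apply (open_inter _ t _ _ (Hf a) IH)].
    intros z; split.
    + intros [H1 H2] i [<-|Hi]; auto.
    + intros H; split; [apply H; simpl; auto|intros i Hi; apply H; simpl; auto].
Qed.

Lemma open_finite_union {X} (t : topology X) {I : Type} (l : list I) (f : I -> set X) :
  (forall i, is_open t (f i)) -> is_open t (fun z => exists i, In i l /\ f i z).
Proof.
  intros Hf.
  eapply open_ext; [|apply (open_union _ t (fun S => exists i, In i l /\ S = f i))].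
  - intros z; split.
    + intros [S [[i [Hi ->]] Hz]]; eauto.
    + intros [i [Hi Hz]]. exists (f i). eauto.
  - intros S [i [_ ->]]; auto.
Qed.

Definition closed {X} (t : topology X) (C : set X) := forall z, top_closure t C z -> C z.

Lemma regular {X} (t : topology X) :
  top_compact t -> hausdorff t ->
  forall x W, is_open t W -> W x ->
  exists V, is_open t V /\ V x /\ forall z, top_closure t V z -> W z.
Proof.
  intros Hc Hh x W HW Hx.
  assert (Hp : forall y, exists p : set X * set X,
    is_open t (fst p) /\ is_open t (snd p) /\ fst p x /\ (~ W y -> snd p y) /\
    forall z, ~ (fst p z /\ snd p z)).
  { intros y. destruct (classic (W y)) as [Hy|Hy].
    - exists ((fun _ => True), (fun _ => False)). simpl.
      repeat split; auto using open_full, open_empty. tauto.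
    - assert (Hxy : x <> y) by (intros ->; auto).
      destruct (Hh x y Hxy) as [U [V [HU [HV [HUx [HVy Hd]]]]]].
      exists (U, V). simpl. repeat split; auto. }
  pose (pr := fun y => proj1_sig (constructive_indefinite_description _ (Hp y))).
  assert (Hpr : forall y, is_open t (fst (pr y)) /\ is_open t (snd (pr y)) /\ fst (pr y) x /\
                  (~ W y -> snd (pr y) y) /\ forall z, ~ (fst (pr y) z /\ snd (pr y) z)).
  { intros y. exact (proj2_sig (constructive_indefinite_description _ (Hp y))). }
  destruct (Hc X (fun y z => W z \/ snd (pr y) z)) as [l Hl].
  - intros y. apply open_union2; auto. apply Hpr.
  - intros y. exists y. destruct (classic (W y)); auto. right. apply Hpr; auto.
  - exists (fun z => forall y, In y l -> fst (pr y) z). split; [|split].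
    + apply open_finite_inter. intros; apply Hpr.
    + intros y _. apply Hpr.
    + intros z Hz. apply NNPP; intros HWz.
      destruct (Hl z) as [y [Hy [Hz'|Hz']]]; [tauto|].
      apply (closure_avoid t (fun z => forall y, In y l -> fst (pr y) z) (snd (pr y)) (proj1 (proj2 (Hpr y))) ) with z; auto.
      intros w Hw Hw'. apply (proj2 (proj2 (proj2 (proj2 (Hpr y)))) w). split; auto.
Qed.

Lemma normal {X} (t : topology X) :
  top_compact t -> hausdorff t ->
  forall C W, closed t C -> is_open t W -> (forall z, C z -> W z) ->
  exists V, is_open t V /\ (forall z, C z -> V z) /\ forall z, top_closure t V z -> W z.
Proof.
  intros Hc Hh C W HC HW HCW.
  assert (Hp : forall y, exists V, is_open t V /\ (C y -> V y) /\
                  forall z, top_closure t V z -> W z).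
  { intros y. destruct (classic (C y)) as [Hy|Hy].
    - destruct (regular t Hc Hh y W HW (HCW y Hy)) as [V [H1 [H2 H3]]]. eauto.
    - exists (fun _ => False). split; [apply open_empty|split; [tauto|]].
      intros z Hz. destruct (Hz _ (open_full _ t) I) as [w [_ []]]. }
  pose (pr := fun y => proj1_sig (constructive_indefinite_description _ (Hp y))).
  assert (Hpr : forall y, is_open t (pr y) /\ (C y -> pr y y) /\
                  forall z, top_closure t (pr y) z -> W z).
  { intros y. exact (proj2_sig (constructive_indefinite_description _ (Hp y))). }
  assert (HCo : is_open t (fun z => ~ C z)).
  { eapply open_ext; [|apply (compl_closure_open t C)].
    intros z; split; intros H H'; apply H; auto. apply closure_incl; auto. }
  destruct (Hc X (fun y z => pr y z \/ ~ C z)) as [l Hl].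
  - intros y. apply open_union2; auto. apply Hpr.
  - intros y. exists y. destruct (classic (C y)); auto. left. apply Hpr; auto.
  - exists (fun z => exists y, In y l /\ pr y z). split; [|split].
    + apply open_finite_union. intros; apply Hpr.
    + intros z Hz. destruct (Hl z) as [y [Hy [H|H]]]; [eauto|tauto].
    + intros z Hz. apply NNPP; intros HWz.
      apply (closure_avoid t (fun z => exists y, In y l /\ pr y z)
               (fun w => forall y, In y l -> ~ top_closure t (pr y) w)) with z; auto.
      * apply open_finite_inter. intros; apply compl_closure_open.
      * intros w Hw [y [Hy Hwy]]. apply (Hw y Hy). apply closure_incl; auto.
      * intros y Hy Hzy. apply HWz. apply (proj2 (proj2 (Hpr y))); auto.
Qed.


Fixpoint fp (P : nat -> Prop) (N : nat) : nat :=
  match N with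
  | O => O
  | S N' => let r := fp P N' in
            if Nat.ltb r N' then r
            else if excluded_middle_informative (P N') then N' else S N'
  end.

Lemma fp_spec P N : (fp P N <= N)%nat /\ (forall k, (k < fp P N)%nat -> ~ P k) /\
                    ((fp P N < N)%nat -> P (fp P N)).
Proof.
  induction N as [|N IH]; simpl.
  - split; [lia|split; intros; lia].
  - destruct IH as [H1 [H2 H3]].
    destruct (Nat.ltb (fp P N) N) eqn:E.
    + apply Nat.ltb_lt in E. split; [lia|split; auto].
    + apply Nat.ltb_ge in E. assert (fp P N = N) by lia.
      destruct excluded_middle_informative as [HP|HP].
      * split; [lia|split; auto]. intros k Hk. apply H2. lia.
      * split; [lia|split].
        -- intros k Hk. destruct (Nat.eq_dec k N) as [->|Hne]; auto. apply H2; lia.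
        -- intros; lia.
Qed.

Definition cont {X} (t : topology X) (f : X -> R) :=
  forall x eps, 0 < eps -> exists V, is_open t V /\ V x /\ forall y, V y -> Rabs (f y - f x) < eps.

Lemma open_impl {X} (t : topology X) (P : Prop) (A : set X) :
  (P -> is_open t A) -> is_open t (fun y => P -> A y).
Proof.
  intros H. destruct (classic P) as [HP|HP].
  - eapply open_ext; [|apply (H HP)]. intros z; split; auto.
  - eapply open_ext; [|apply (open_full _ t)]. intros z; split; auto. intros _ HP'; tauto.
Qed.

Lemma Rabs_le_inv x b : Rabs x <= b -> -b <= x <= b.
Proof. unfold Rabs; destruct Rcase_abs; lra. Qed.

Lemma Rabs_lt_between' x b : -b < x < b -> Rabs x < b.
Proof. unfold Rabs; destruct Rcase_abs; lra. Qed.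

Lemma half_pow_pos n : 0 < (/2)^n.
Proof. apply pow_lt. lra. Qed.

Lemma ury_core {X} (t : topology X) (C W : set X) (L : nat -> nat -> set X) :
  (forall n k, is_open t (L n k)) ->
  (forall z, C z -> L O O z) ->
  (forall z, L O 1%nat z <-> W z) ->
  (forall n k, (k <= 2 ^ n)%nat -> forall z, L (S n) (2 * k)%nat z <-> L n k z) ->
  (forall n k, (k < 2 ^ n)%nat -> forall z, L (S n) (S (2 * k)) z -> L n (S k) z) ->
  (forall n k, (k < 2 ^ n)%nat -> forall z, top_closure t (L n k) z -> L n (S k) z) ->
  exists f : X -> R, cont t f /\ (forall x, -1 <= f x <= 2) /\
    (forall x, C x -> f x <= 0) /\ (forall x, ~ W x -> 1 <= f x).
Proof.
  intros A1 A2 A3 A4 A5 A6.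
  assert (Lmono : forall n k k' z, (k <= k')%nat -> (k' <= 2 ^ n)%nat -> L n k z -> L n k' z).
  { intros n k k' z Hk Hk'. induction k' as [|k' IH]; intros Hz.
    - replace k with O in Hz by lia; auto.
    - destruct (Nat.eq_dec k (S k')) as [<-|Hne]; auto.
      apply A6; [lia|]. apply closure_incl. apply IH; auto; lia. }
  assert (Wn : forall n z, L n (2 ^ n)%nat z <-> W z).
  { induction n; intros z; [apply A3|]. rewrite <- IHn.
    change (2 ^ S n)%nat with (2 * 2 ^ n)%nat. apply A4; lia. }
  assert (C0 : forall n z, C z -> L n O z).
  { induction n; intros z Hz; auto. apply (A4 n O); [lia|]. auto. }
  pose (cnt := fun n x => fp (fun k => L n k x) (S (2 ^ n))).
  assert (Cb : forall n x, (cnt n x <= S (2 ^ n))%nat).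
  { intros; apply fp_spec. }
  assert (Clt : forall n x k, (k < cnt n x)%nat -> ~ L n k x).
  { intros n x; apply fp_spec. }
  assert (C3 : forall n x, (cnt n x <= 2 ^ n)%nat -> L n (cnt n x) x).
  { intros n x H. apply fp_spec. unfold cnt in *; lia. }
  assert (C1 : forall n x k, L n k x -> (k <= 2 ^ n)%nat -> (cnt n x <= k)%nat).
  { intros n x k Hk Hkn. destruct (Nat.le_gt_cases (cnt n x) k); auto.
    exfalso; apply (Clt n x k); auto. }
  assert (C2 : forall n x k, ~ L n k x -> (k <= 2 ^ n)%nat -> (k < cnt n x)%nat).
  { intros n x k Hk Hkn. destruct (Nat.le_gt_cases (cnt n x) k) as [H|H]; auto.
    exfalso; apply Hk. apply Lmono with (cnt n x); auto. apply C3; lia. }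
  assert (R1 : forall n x, (cnt (S n) x <= 2 * cnt n x)%nat).
  { intros n x. destruct (Nat.le_gt_cases (cnt n x) (2 ^ n)) as [H|H].
    - apply C1; [apply A4; auto|]. change (2 ^ S n)%nat with (2 * 2 ^ n)%nat. lia.
    - pose proof (Cb (S n) x). change (2 ^ S n)%nat with (2 * 2 ^ n)%nat in *. lia. }
  assert (R2 : forall n x, (2 * cnt n x <= S (cnt (S n) x))%nat).
  { intros n x. pose proof (Cb (S n) x) as Hb. change (2 ^ S n)%nat with (2 * 2 ^ n)%nat in *.
    destruct (Nat.le_gt_cases (cnt (S n) x) (2 * 2 ^ n)) as [H|H].
    - pose proof (C3 (S n) x H) as HL.
      destruct (Nat.Even_or_Odd (cnt (S n) x)) as [[k Hk]|[k Hk]]; rewrite Hk in *.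
      + apply (proj1 (A4 n k ltac:(lia) x)) in HL. pose proof (C1 n x k HL ltac:(lia)). lia.
      + replace (2 * k + 1)%nat with (S (2 * k)) in * by lia.
        apply A5 in HL; [|lia]. pose proof (C1 n x (S k) HL). lia.
    - assert (Hc : cnt (S n) x = S (2 * 2 ^ n)) by lia.
      assert (HnW : ~ W x).
      { intros HW. apply (Clt (S n) x (2 ^ S n)%nat).
        - change (2 ^ S n)%nat with (2 * 2 ^ n)%nat; lia.
        - apply Wn; auto. }
      assert (~ L n (2 ^ n)%nat x) by (rewrite Wn; auto).
      pose proof (C2 n x (2 ^ n)%nat H0 (le_n _)). pose proof (Cb n x). lia. }
  pose (g := fun n x => INR (cnt n x) * (/2) ^ n).
  pose (h := fun n x => g n x - (/2) ^ n).
  assert (g1 : forall n x, g (S n) x <= g n x).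
  { intros n x. unfold g. rewrite <- tech_pow_Rmult. pose proof (half_pow_pos n) as Hq.
    pose proof (le_INR _ _ (R1 n x)) as H0. rewrite mult_INR in H0.
    replace (INR 2) with 2 in H0 by (simpl; lra).
    assert (0 <= (2 * INR (cnt n x) - INR (cnt (S n) x)) * (/2)^n) by (apply Rmult_le_pos; lra).
    nra. }
  assert (g2 : forall n x, g n x <= g (S n) x + (/2) ^ (S n)).
  { intros n x. unfold g. rewrite <- !tech_pow_Rmult. pose proof (half_pow_pos n) as Hq.
    pose proof (le_INR _ _ (R2 n x)) as H0. rewrite mult_INR, (S_INR (cnt (S n) x)) in H0.
    replace (INR 2) with 2 in H0 by (simpl; lra).
    assert (0 <= (INR (cnt (S n) x) + 1 - 2 * INR (cnt n x)) * (/2)^n) by (apply Rmult_le_pos; lra).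
    nra. }
  assert (gm : forall n m x, (n <= m)%nat -> g m x <= g n x).
  { intros n m x Hnm. induction Hnm; [lra|]. pose proof (g1 m x). lra. }
  assert (hm : forall n m x, (n <= m)%nat -> h n x <= h m x).
  { intros n m x Hnm. induction Hnm; [lra|]. pose proof (g2 m x). unfold h in *. simpl in *. lra. }
  assert (hg : forall n m x, h m x <= g n x).
  { intros n m x. pose proof (hm m (max n m) x ltac:(lia)). pose proof (gm n (max n m) x ltac:(lia)).
    pose proof (half_pow_pos (max n m)). unfold h in *. lra. }
  assert (Hb : forall x, bound (fun r => exists n, r = h n x)).
  { intros x. exists (g O x). intros r [n ->]. apply hg. }
  assert (Hne : forall x, exists r, (fun r => exists n, r = h n x) r).
  { intros x. exists (h O x). eauto. }
  pose (f := fun x => proj1_sig (completeness _ (Hb x) (Hne x))).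
  assert (fs : forall n x, h n x <= f x <= g n x).
  { intros n x. unfold f. destruct (completeness _ (Hb x) (Hne x)) as [m [Hm1 Hm2]]. simpl.
    split; [apply Hm1; eauto|]. apply Hm2. intros r [k ->]. apply hg. }
  assert (g0 : forall x, 0 <= g O x <= 2).
  { intros x. unfold g. simpl. pose proof (Cb O x). simpl in H.
    apply le_INR in H. simpl in H. pose proof (pos_INR (cnt O x)). lra. }
  exists f. split; [|split; [|split]].
  -
    intros x eps Heps.
    destruct (pow_lt_1_zero (/2) ltac:(rewrite Rabs_pos_eq; lra) (eps / 3) ltac:(lra)) as [n Hn].
    specialize (Hn n (le_n _)). rewrite Rabs_pos_eq in Hn by (apply Rlt_le, half_pow_pos).
    set (c := cnt n x).
    exists (fun y => ((c <= 2 ^ n)%nat -> L n c y) /\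
                     ((2 <= c)%nat -> ~ top_closure t (L n (c - 2)%nat) y)).
    split; [|split].
    + apply (open_inter _ t); apply open_impl; intros _; [apply A1|apply compl_closure_open].
    + split.
      * intros Hc. apply C3; auto.
      * intros Hc Hcl. apply (Clt n x (c - 1)%nat); [unfold c; lia|].
        replace (c - 1)%nat with (S (c - 2)) by lia. apply A6; auto.
        pose proof (Cb n x). unfold c in *. lia.
    + intros y [Hy1 Hy2].
      assert (U1 : (cnt n y <= c)%nat).
      { destruct (Nat.le_gt_cases c (2 ^ n)) as [H|H].
        - apply C1; auto.
        - pose proof (Cb n y). pose proof (Cb n x). unfold c in *. lia. }
      assert (U2 : (c <= S (cnt n y))%nat).
      { destruct (Nat.le_gt_cases 2 c) as [H|H]; [|lia].
        assert (~ L n (c - 2)%nat y) by (intros HL; apply (Hy2 H); apply closure_incl; auto).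
        pose proof (Cb n x). pose proof (C2 n y (c - 2)%nat H0 ltac:(unfold c in *; lia)). lia. }
      apply le_INR in U1. apply le_INR in U2. rewrite S_INR in U2.
      assert (Hgd : Rabs (g n y - g n x) <= (/2) ^ n).
      { unfold g. fold c. rewrite <- Rmult_minus_distr_r, Rabs_mult.
        rewrite (Rabs_pos_eq ((/2) ^ n)) by (apply Rlt_le, half_pow_pos).
        pose proof (half_pow_pos n).
        assert (Rabs (INR (cnt n y) - INR c) <= 1) by (apply Rabs_le; lra). nra. }
      pose proof (fs n x). pose proof (fs n y). unfold h in *.
      apply Rabs_le_inv in Hgd. apply Rabs_lt_between'. lra.
  - intros x. pose proof (fs O x). pose proof (g0 x). unfold h in *. simpl in *. lra.
  - intros x Hx. pose proof (fs O x). assert (cnt O x = O).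
    { pose proof (C1 O x O (C0 O x Hx) ltac:(simpl; lia)). lia. }
    unfold g in *. rewrite H0 in H. simpl in H. lra.
  - intros x Hx. pose proof (fs O x). assert (cnt O x = 2%nat).
    { assert (~ L O 1%nat x) by (rewrite A3; auto).
      pose proof (C2 O x 1%nat H0 ltac:(simpl; lia)). pose proof (Cb O x). simpl in *. lia. }
    unfold h, g in *. rewrite H0 in H. simpl in H. lra.
Qed.


Lemma closure_closed {X} (t : topology X) (A : set X) : closed t (top_closure t A).
Proof.
  intros z Hz U HU HUz. destruct (Hz U HU HUz) as [w [HUw Hw]]. exact (Hw U HU HUw).
Qed.

Lemma urysohn {X} (t : topology X) :
  top_compact t -> hausdorff t ->
  forall C W, closed t C -> is_open t W -> (forall z, C z -> W z) ->
  exists f : X -> R, cont t f /\ (forall x, -1 <= f x <= 2) /\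
    (forall x, C x -> f x <= 0) /\ (forall x, ~ W x -> 1 <= f x).
Proof.
  intros Hc Hh C W HC HW HCW.
  destruct (normal t Hc Hh C W HC HW HCW) as [V0 [HV0 [HCV0 HV0W]]].
  assert (Hi : forall A B : set X, exists V,
    (is_open t B -> is_open t V) /\
    (is_open t B -> (forall z, top_closure t A z -> B z) ->
       (forall z, top_closure t A z -> V z) /\ (forall z, top_closure t V z -> B z))).
  { intros A B. destruct (classic (is_open t B /\ forall z, top_closure t A z -> B z)) as [[HB HAB]|Hn].
    - destruct (normal t Hc Hh (top_closure t A) B (closure_closed t A) HB HAB) as [V [H1 [H2 H3]]].
      exists V. split; auto.
    - exists B. split; auto. intros HB HAB. exfalso; auto. }
  pose (interp := fun A B => proj1_sig (constructive_indefinite_description _ (Hi A B))).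
  assert (Hint : forall A B, (is_open t B -> is_open t (interp A B)) /\
    (is_open t B -> (forall z, top_closure t A z -> B z) ->
       (forall z, top_closure t A z -> interp A B z) /\ (forall z, top_closure t (interp A B) z -> B z))).
  { intros A B. exact (proj2_sig (constructive_indefinite_description _ (Hi A B))). }
  pose (L := fix L (n : nat) : nat -> set X :=
         match n with
         | O => fun k => match k with O => V0 | 1%nat => W | _ => fun _ => True end
         | S n' => fun m => if Nat.even m then L n' (Nat.div2 m)
                            else interp (L n' (Nat.div2 m)) (L n' (S (Nat.div2 m)))
         end).
  assert (LS : forall n m, L (S n) m = if Nat.even m then L n (Nat.div2 m)
                            else interp (L n (Nat.div2 m)) (L n (S (Nat.div2 m)))).
  { reflexivity. }
  assert (Lev : forall n k, L (S n) (2 * k)%nat = L n k).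
  { intros n k. rewrite LS, Nat.even_even, Nat.div2_double. reflexivity. }
  assert (Lodd : forall n k, L (S n) (S (2 * k)) = interp (L n k) (L n (S k))).
  { intros n k. rewrite LS. replace (S (2 * k)) with (2 * k + 1)%nat by lia.
    rewrite Nat.even_odd. replace (2 * k + 1)%nat with (S (2 * k)) by lia.
    rewrite Nat.div2_succ_double. reflexivity. }
  assert (A1 : forall n k, is_open t (L n k)).
  { induction n as [|n IH]; intros k.
    - destruct k as [|[|k]]; simpl; auto. apply open_full.
    - rewrite LS. destruct (Nat.even k); auto. apply Hint; auto. }
  assert (A6 : forall n k, (k < 2 ^ n)%nat -> forall z, top_closure t (L n k) z -> L n (S k) z).
  { induction n as [|n IH]; intros k Hk.
    - simpl in Hk. replace k with O by lia. simpl. auto.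
    - change (2 ^ S n)%nat with (2 * 2 ^ n)%nat in Hk.
      destruct (Nat.Even_or_Odd k) as [[j ->]|[j ->]].
      + rewrite Lev, Lodd. apply Hint; auto. apply IH; lia.
      + replace (2 * j + 1)%nat with (S (2 * j)) by lia.
        rewrite Lodd. replace (S (S (2 * j))) with (2 * S j)%nat by lia. rewrite Lev.
        apply Hint; auto. apply IH; lia. }
  apply (ury_core t C W L A1).
  - intros z Hz. simpl. auto.
  - intros z. simpl. tauto.
  - intros n k _ z. rewrite Lev. tauto.
  - intros n k Hk z. rewrite Lodd. intros Hz.
    apply (proj2 (proj2 (Hint _ _) (A1 n (S k)) (A6 n k Hk))). apply closure_incl; auto.
  - exact A6.
Qed.


Lemma half_pow_le1 m : (/2)^m <= 1.
Proof. induction m; simpl; [lra|]. pose proof (half_pow_pos m). lra. Qed.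

Lemma half_pow_anti a b : (a <= b)%nat -> (/2)^b <= (/2)^a.
Proof.
  intros H. replace b with (a + (b - a))%nat by lia. rewrite pow_add.
  pose proof (half_pow_le1 (b - a)). pose proof (half_pow_pos a). nra.
Qed.

Lemma metric_from_family {X} (t : topology X) (F : nat -> nat -> X -> R) :
  countably_compact t -> (forall j k, cont t (F j k)) ->
  (forall j k x, -1 <= F j k x <= 2) ->
  (forall x y, x <> y -> exists j k, F j k x <> F j k y) -> metrizable t.
Proof.
  intros Hcc Hcont Hbd Hsep.
  pose (E := fun x y r => exists j k, r = (/2)^(j+k) * Rabs (F j k x - F j k y)).
  assert (Eb : forall x y r, E x y r -> 0 <= r <= 3).
  { intros x y r [j [k ->]]. pose proof (half_pow_le1 (j+k)). pose proof (half_pow_pos (j+k)).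
    pose proof (Hbd j k x). pose proof (Hbd j k y). pose proof (Rabs_pos (F j k x - F j k y)).
    assert (Rabs (F j k x - F j k y) <= 3) by (apply Rabs_le; lra). nra. }
  assert (Hb : forall x y, bound (E x y)).
  { intros x y. exists 3. intros r Hr. apply (Eb x y r Hr). }
  assert (Hne : forall x y, exists r, E x y r).
  { intros x y. exists ((/2)^(0+0) * Rabs (F O O x - F O O y)). exists O, O. reflexivity. }
  pose (d := fun x y => proj1_sig (completeness _ (Hb x y) (Hne x y))).
  assert (ds : forall x y, is_lub (E x y) (d x y)).
  { intros x y. unfold d. destruct (completeness _ (Hb x y) (Hne x y)); auto. }
  assert (d_ge : forall x y j k, (/2)^(j+k) * Rabs (F j k x - F j k y) <= d x y).
  { intros x y j k. apply (ds x y). exists j, k; auto. }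
  assert (d_le : forall x y b, (forall j k, (/2)^(j+k) * Rabs (F j k x - F j k y) <= b) -> d x y <= b).
  { intros x y b H. apply (ds x y). intros r [j [k ->]]. auto. }
  assert (d_pos : forall x y, 0 <= d x y).
  { intros x y. eapply Rle_trans; [|apply (d_ge x y O O)]. apply Rmult_le_pos.
    apply Rlt_le, half_pow_pos. apply Rabs_pos. }
  assert (d_tri : forall x y z, d x z <= d x y + d y z).
  { intros x y z. apply d_le. intros j k.
    pose proof (d_ge x y j k). pose proof (d_ge y z j k). pose proof (half_pow_pos (j+k)).
    pose proof (Rabs_triang (F j k x - F j k y) (F j k y - F j k z)).
    replace (F j k x - F j k y + (F j k y - F j k z)) with (F j k x - F j k z) in H2 by ring.
    nra. }
  assert (d_sym : forall x y, d x y = d y x).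
  { assert (forall x y, d x y <= d y x).
    { intros x y. apply d_le. intros j k. rewrite Rabs_minus_sym. apply d_ge. }
    intros x y. apply Rle_antisym; auto. }
  assert (d_cont : forall x r, 0 < r -> exists V, is_open t V /\ V x /\ forall y, V y -> d x y < r).
  { intros x r Hr.
    destruct (pow_lt_1_zero (/2) ltac:(rewrite Rabs_pos_eq; lra) (r / 6) ltac:(lra)) as [J HJ].
    specialize (HJ J (le_n _)). rewrite Rabs_pos_eq in HJ by (apply Rlt_le, half_pow_pos).
    assert (Hc : forall p : nat * nat, exists V, is_open t V /\ V x /\
               forall y, V y -> Rabs (F (fst p) (snd p) y - F (fst p) (snd p) x) < r / 2).
    { intros [j k]. apply Hcont. lra. }
    pose (Vf := fun p => proj1_sig (constructive_indefinite_description _ (Hc p))).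
    assert (HVf : forall p, is_open t (Vf p) /\ Vf p x /\
               forall y, Vf p y -> Rabs (F (fst p) (snd p) y - F (fst p) (snd p) x) < r / 2).
    { intros p. exact (proj2_sig (constructive_indefinite_description _ (Hc p))). }
    exists (fun y => forall p, In p (list_prod (seq 0 J) (seq 0 J)) -> Vf p y).
    split; [|split].
    - apply open_finite_inter. intros p; apply HVf.
    - intros p _. apply HVf.
    - intros y Hy. apply Rle_lt_trans with (r / 2); [|lra]. apply d_le. intros j k.
      destruct (Compare_dec.lt_dec j J) as [HjJ|HjJ]; [destruct (Compare_dec.lt_dec k J) as [HkJ|HkJ]|].
      + assert (Hin : In (j, k) (list_prod (seq 0 J) (seq 0 J))).
        { apply in_prod; apply in_seq; lia. }
        pose proof (proj2 (proj2 (HVf (j, k))) y (Hy _ Hin)). simpl in H.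
        rewrite Rabs_minus_sym. pose proof (half_pow_le1 (j + k)). pose proof (half_pow_pos (j+k)).
        pose proof (Rabs_pos (F j k y - F j k x)). nra.
      + pose proof (half_pow_anti J (j + k) ltac:(lia)).
        assert (Rabs (F j k x - F j k y) <= 3).
        { pose proof (Hbd j k x). pose proof (Hbd j k y). apply Rabs_le; lra. }
        pose proof (half_pow_pos (j+k)). pose proof (Rabs_pos (F j k x - F j k y)). nra.
      + pose proof (half_pow_anti J (j + k) ltac:(lia)).
        assert (Rabs (F j k x - F j k y) <= 3).
        { pose proof (Hbd j k x). pose proof (Hbd j k y). apply Rabs_le; lra. }
        pose proof (half_pow_pos (j+k)). pose proof (Rabs_pos (F j k x - F j k y)). nra. }
  assert (mo_open : forall U, metric_open d U -> is_open t U).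
  { intros U HU.
    eapply open_ext; [|apply (open_union _ t (fun V => is_open t V /\ forall y, V y -> U y))].
    - intros x; split.
      + intros [V [[_ HV] Hx]]; auto.
      + intros Hx. destruct (HU x Hx) as [eps [Heps Hball]].
        destruct (d_cont x eps Heps) as [V [HV [HVx HVd]]].
        exists V. split; auto.
    - intros V [H _]; auto. }
  assert (d_zero : forall x y, d x y = 0 -> x = y).
  { intros x y H. apply NNPP; intros Hxy. destruct (Hsep x y Hxy) as [j [k Hjk]].
    pose proof (d_ge x y j k). pose proof (half_pow_pos (j+k)).
    assert (0 < Rabs (F j k x - F j k y)) by (apply Rabs_pos_lt; lra).
    assert (0 < (/2)^(j+k) * Rabs (F j k x - F j k y)) by (apply Rmult_lt_0_compat; auto).
    lra. }
  exists d. split.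
  - split; [auto|split; [|split; auto]].
    intros x y; split; [apply d_zero|].
    intros ->. apply Rle_antisym; [|auto]. apply d_le. intros j k.
    rewrite Rminus_diag, Rabs_R0. lra.
  - intros U; split; [|apply mo_open].
    intros HU x Hx.
    assert (Hopen : forall r, is_open t (fun y => r < d x y)).
    { intros r. apply mo_open. intros y Hy. exists (d x y - r). split; [lra|].
      intros z Hz. pose proof (d_tri x z y). rewrite (d_sym z y) in H. lra. }
    destruct (Hcc (fun n y => U y \/ / (INR n + 1) < d x y)) as [m Hm].
    + intros n. apply open_union2; auto.
    + intros y. destruct (classic (U y)) as [Hy|Hy]; [exists O; auto|].
      assert (Hxy : x <> y) by (intros ->; auto).
      assert (Hd : 0 < d x y).
      { destruct (Rle_lt_or_eq_dec 0 (d x y) (d_pos x y)) as [H|H]; auto.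
        exfalso. apply Hxy. apply d_zero. auto. }
      destruct (archimed_cor1 _ Hd) as [N [HN1 HN2]].
      exists N. right. apply Rle_lt_trans with (/ INR N); auto.
      apply Rinv_le_contravar. apply lt_0_INR; auto. lra.
    + exists (/ (INR m + 1)). split.
      * apply Rinv_0_lt_compat. pose proof (pos_INR m). lra.
      * intros y Hy. destruct (Hm y) as [n [Hn [HU'|Hlt]]]; auto.
        exfalso. assert (/ (INR m + 1) <= / (INR n + 1)).
        { apply Rinv_le_contravar. pose proof (pos_INR n). lra.
          apply le_INR in Hn. lra. }
        lra.
Qed.


Lemma sep_family {X} (t : topology X) (M : nat -> set X) :
  top_compact t -> hausdorff t ->
  (forall x O, is_open t O -> O x -> exists c, M c x /\ forall z, M c z -> O z) ->
  exists F : nat -> nat -> X -> R, (forall j k, cont t (F j k)) /\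
    (forall j k x, -1 <= F j k x <= 2) /\
    (forall x y, x <> y -> exists j k, F j k x <> F j k y).
Proof.
  intros Hc Hh HM.
  assert (Hex : forall p : nat * nat, exists f : X -> R, cont t f /\ (forall x, -1 <= f x <= 2) /\
    ((forall z, ~ (top_closure t (M (fst p)) z /\ top_closure t (M (snd p)) z)) ->
     (forall z, top_closure t (M (fst p)) z -> f z <= 0) /\
     (forall z, top_closure t (M (snd p)) z -> 1 <= f z))).
  { intros [j k]. simpl.
    destruct (classic (forall z, ~ (top_closure t (M j) z /\ top_closure t (M k) z))) as [Hd|Hd].
    - destruct (urysohn t Hc Hh (top_closure t (M j)) (fun z => ~ top_closure t (M k) z)
                  (closure_closed t _) (compl_closure_open t _)) as [f [H1 [H2 [H3 H4]]]].
      { intros z Hz Hz'. apply (Hd z); auto. }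
      exists f. split; auto. split; auto.

    - exists (fun _ => 0). split; [|split; [intros; lra|tauto]].
      intros x eps Heps. exists (fun _ => True). split; [apply open_full|split; auto].
      intros y _. rewrite Rminus_diag, Rabs_R0. auto. }
  pose (F := fun j k => proj1_sig (constructive_indefinite_description _ (Hex (j, k)))).
  assert (HF : forall j k, cont t (F j k) /\ (forall x, -1 <= F j k x <= 2) /\
    ((forall z, ~ (top_closure t (M j) z /\ top_closure t (M k) z)) ->
     (forall z, top_closure t (M j) z -> F j k z <= 0) /\
     (forall z, top_closure t (M k) z -> 1 <= F j k z))).
  { intros j k. exact (proj2_sig (constructive_indefinite_description _ (Hex (j, k)))). }
  exists F. split; [intros; apply HF|split; [intros; apply HF|]].
  intros x y Hxy.
  destruct (Hh x y Hxy) as [U [V [HU [HV [HUx [HVy Hd]]]]]].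
  destruct (regular t Hc Hh x U HU HUx) as [U' [HU' [HU'x HU'c]]].
  destruct (regular t Hc Hh y V HV HVy) as [V' [HV' [HV'y HV'c]]].
  destruct (HM x U' HU' HU'x) as [j [Hjx HjU]].
  destruct (HM y V' HV' HV'y) as [k [Hky HkV]].
  exists j, k.
  destruct (proj2 (proj2 (HF j k))) as [H1 H2].
  - intros z [Hz1 Hz2]. apply (Hd z). split.
    + apply HU'c. apply (closure_mono t (M j) U' HjU); auto.
    + apply HV'c. apply (closure_mono t (M k) V' HkV); auto.
  - pose proof (H1 x (closure_incl t _ x Hjx)). pose proof (H2 y (closure_incl t _ y Hky)). lra.
Qed.

Theorem theorem3p18 (X : Type) (t : topology X) :
  hausdorff t -> countably_compact t ->
  (exists N : set X -> Prop, point_countable N /\ pytkeev_network t N) ->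
  top_compact t /\ metrizable t.
Proof.
  intros Hh Hcc [N [Hpc Hpyt]].
  pose proof (compact_of t N Hcc Hpc Hpyt) as Hc.
  split; auto.
  destruct (classic (inhabited X)) as [[x0]|Hemp].
  - destruct (sep_family t (Mset x0 (enum_of Hpc)) Hc Hh
                (Mnetwork t N x0 Hpc Hh Hcc Hpyt)) as [F [H1 [H2 H3]]].
    apply (metric_from_family t F Hcc H1 H2 H3).
  - assert (Hf : forall x : X, False) by (intros x; apply Hemp; constructor; exact x).
    exists (fun _ _ => 0). split.
    + repeat split; intros; try (exfalso; eauto).
    + intros U; split.
      * intros _ x. destruct (Hf x).
      * intros _. eapply open_ext; [|apply (open_full _ t)]. intros x; destruct (Hf x).
Qed.
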